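(* Let $W$ be an outcome returned by \textsc{fair greedy capture} parameterized by $q\le k$ on an instance with $N=C$. Then (1) $W$ is in the $5$-$q$-core; (2) $W$ satisfies $3$-$q$-individual fairness if $k\le n$; (3) for every $\gamma>1$, $W$ is in the $\left(\gamma,\frac{5\gamma}{\gamma-1}\right)$-$q$-transferable core restricted to $\ell<2q$.
   Context: Let $(\mathcal X,d)$ be a metric space, $N=[n]$ a set of agents located in $\mathcal X$, candidate set $C=N$, $k\in\mathbb N^+$; an outcome is $W\subseteq C$ with $|W|\le k$; $B(i,r)=\{x\in\mathcal X:d(i,x)\le r\}$; $d^q(i,W)$ is the distance from $i$ to its $q$-th closest point of $W$. \textsc{Fair greedy capture} with parameter $q$: maintain a set of active agents (initially all of $N$) and $W=\emptyset$, and increase a radius $\delta$ continuously from $0$ around every agent. Whenever some ball $B(p,\delta)$, $p\in N$, contains at least $qn/k$ active agents, select $q$ of these active agents uniformly at random and add them to $W$, and delete (deactivate) in total $\lceil qn/k\rceil$ of the active agents in this ball. After the capturing phase, a final random sampling step selects the remaining centers among the remaining agents so that each agent ends up selected with probability exactly $k/n$. $\alpha$-$q$-core: no $\ell\in\mathbb N$, $N'\subseteq N$ with $|N'|\ge\ell n/k$, and $C'\subseteq C$ with $q\le|C'|\le\ell$ such that $\alpha\,d^q(i,C')<d^q(i,W)$ for all $i\in N'$. $\beta$-$q$-individual fairness (for $k\le n$): $d^q(i,W)\le\beta\,r^q(i)$ for all $i\in N$, with $r^q(i)=\min\{r:|B(i,r)\cap N|\ge qn/k\}$. $(\gamma,\alpha)$-$q$-transferable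 core restricted to $\ell<2q$: no $\ell\in\mathbb N$ with $\ell<2q$, $N'\subseteq N$ with $|N'|\ge\gamma\ell n/k$, and $C'\subseteq C$ with $q\le|C'|\le\ell$ such that $\alpha\sum_{i\in N'}d^q(i,C')<\sum_{i\in N'}d^q(i,W)$. *)

(* Defs.v *)
From HB Require Import structures.
From mathcomp Require Import all_boot all_order all_algebra.
From mathcomp Require Import reals.
Set Implicit Arguments. Unset Strict Implicit. Unset Printing Implicit Defensive.
Import Order.TTheory GRing.Theory Num.Theory.
Local Open Scope ring_scope.

Section FGC.
Variables (R : realType) (X : Type) (d : X -> X -> R).

Definition is_metric : Prop :=
  [/\ forall x y, 0 <= d x y,
      forall x y, d x y = 0 <-> x = y,
      forall x y, d x y = d y x
    & forall x y z, d x z <= d x y + d y z].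

Variables (n k q : nat) (loc : 'I_n -> X).
(* agents N = 'I_n located at loc i; candidates C = N *)

Definition ball (p : 'I_n) (r : R) : {set 'I_n} :=
  [set j | d (loc p) (loc j) <= r].

Definition thr : R := (q * n)%:R / k%:R.

(* ceil (q n / k), as a natural number (k > 0) *)
Definition ceil_thr : nat := (q * n + k.-1) %/ k.

(* d^q(i, W): distance from i to its q-th closest point of W
   (the q-th smallest of the distances d(i, j), j in W, with multiplicity) *)
Definition dq (i : 'I_n) (W : {set 'I_n}) : R :=
  nth 0 (sort (fun x y : R => x <= y) [seq d (loc i) (loc j) | j <- enum W]) q.-1.

Definition qualifies (A : {set 'I_n}) (p : 'I_n) (r : R) : Prop :=
  thr <= (#|ball p r :&: A|)%:R.

(* capture A W : starting the capturing phase with active set A (and the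
   radius at the smallest value at which some ball may qualify), the
   capturing phase can add exactly the centers W. *)
Inductive capture : {set 'I_n} -> {set 'I_n} -> Prop :=
| cap_stop A :
    (forall p r, ~ qualifies A p r) -> capture A set0
| cap_step A (p : 'I_n) (r : R) (S D W : {set 'I_n}) :
    qualifies A p r ->
    (forall p' r', qualifies A p' r' -> r <= r') ->
    S \subset ball p r :&: A -> #|S| = q ->
    S \subset D -> D \subset ball p r :&: A -> #|D| = ceil_thr ->
    capture (A :\: D) W ->
    capture A (S :|: W).

(* W is a possible outcome of fair greedy capture: the centers selected in the
   capturing phase plus the ones added by the final sampling step, |W| <= k *)
Definition fgc_outcome (W : {set 'I_n}) : Prop :=
  exists W0, [/\ capture setT W0, W0 \subset W & (#|W| <= k)%N].

Definition in_q_core (alpha : R) (W : {set 'I_n}) : Prop :=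
  ~ exists (l : nat) (N' C' : {set 'I_n}),
      [/\ (l * n)%:R / k%:R <= (#|N'|)%:R :> R,
          (q <= #|C'| <= l)%N
        & forall i, i \in N' -> alpha * dq i C' < dq i W].

(* beta-q-individual fairness: d^q(i,W) <= beta r^q(i), where
   r^q(i) = min { r | |B(i,r) cap N| >= q n / k } (the minimum is attained) *)
Definition q_individually_fair (beta : R) (W : {set 'I_n}) : Prop :=
  forall i (r : R), thr <= (#|ball i r|)%:R -> dq i W <= beta * r.

Definition in_q_tcore_restr (gamma alpha : R) (W : {set 'I_n}) : Prop :=
  ~ exists (l : nat) (N' C' : {set 'I_n}),
      [/\ (l < 2 * q)%N,
          gamma * ((l * n)%:R / k%:R) <= (#|N'|)%:R :> R,
          (q <= #|C'| <= l)%N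
        & alpha * (\sum_(i in N') dq i C') < \sum_(i in N') dq i W].

End FGC.

(* Main.v *)
Require Import Defs.
From HB Require Import structures.
From mathcomp Require Import all_boot all_order all_algebra.
From mathcomp Require Import reals.
From mathcomp Require Import ring lra zify.
Import Order.TTheory GRing.Theory Num.Theory.
Local Open Scope ring_scope.


Lemma count_enum_card (n : nat) (W : {set 'I_n}) (P : pred 'I_n) :
  count P (enum W) = #|[set w in W | P w]|.
Proof.
rewrite -size_filter.
have /card_uniqP <- : uniq (filter P (enum W)) by rewrite filter_uniq ?enum_uniq.
apply: eq_card => w; by rewrite mem_filter mem_enum inE andbC.
Qed.

Section DQ.
Variables (R : realType) (X : Type) (d : X -> X -> R) (n q : nat) (loc : 'I_n -> X).

Let sq i (W : {set 'I_n}) := sort (fun x y : R => x <= y) [seq d (loc i) (loc j) | j <- enum W].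

Lemma sq_sorted i W : sorted <=%O (sq i W).
Proof. exact: (sort_sorted (@le_total _ R)). Qed.

Lemma count_sq i W x :
  count (<= x)%O (sq i W) = #|[set w in W | d (loc i) (loc w) <= x]|.
Proof.
rewrite /sq (permP (permEl (perm_sort _ _))) count_map count_enum_card //.
Qed.

Lemma size_sq i W : size (sq i W) = #|W|.
Proof. by rewrite /sq size_sort size_map -cardE. Qed.

Lemma dq_le i (W S : {set 'I_n}) (x : R) : (0 < q)%N -> S \subset W -> (q <= #|S|)%N ->
  (forall s, s \in S -> d (loc i) (loc s) <= x) -> dq d q loc i W <= x.
Proof.
move=> q0 SW qS Hs.
rewrite /dq -/(sq i W).
apply: nth_count_le; first exact: sq_sorted.
rewrite count_sq -ltnS prednK // ltnS; apply: (leq_trans qS).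
apply: subset_leq_card; apply/subsetP => s sS.
by rewrite inE (subsetP SW) // Hs.
Qed.

Lemma card_T i (C : {set 'I_n}) : (0 < q)%N -> (q <= #|C|)%N ->
  (q <= #|[set c in C | (d (loc i) (loc c) <= dq d q loc i C)%R]|)%N.
Proof.
move=> q0 qC; rewrite -(count_sq i C (dq d q loc i C)).
rewrite leqNgt; apply/negP => H.
have : (dq d q loc i C < dq d q loc i C).
  rewrite /dq -/(sq i C); apply: nth_count_gt; first exact: sq_sorted.
  by rewrite size_sq (leq_trans _ qC) ?andbT // -ltnS prednK // ltnS.
by rewrite ltxx.
Qed.

Lemma dq_ge0 i W : (forall x y, 0 <= d x y) -> 0 <= dq d q loc i W.
Proof.
move=> d0; rewrite /dq.
case: (ltnP q.-1 (size (sq i W))) => H.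
  have : nth 0 (sq i W) q.-1 \in sq i W by apply: mem_nth.
  by rewrite /sq mem_sort => /mapP [j _ ->].
by rewrite -/(sq i W) nth_default.
Qed.

End DQ.


Section Cap.
Variables (R : realType) (X : Type) (d : X -> X -> R) (n k q : nat) (loc : 'I_n -> X).
Hypothesis dsym : forall x y, d x y = d y x.
Hypothesis dtri : forall x y z, d x z <= d x y + d y z.

Lemma capture_hit A W0 : capture d k q loc A W0 ->
  forall (Q : {set 'I_n}) m rho, Q \subset A -> Q \subset ball d loc m rho ->
  thr R n k q <= (#|Q|)%:R ->
  exists j (S : {set 'I_n}), [/\ j \in Q, S \subset W0, #|S| = q &
     forall s, s \in S -> d (loc j) (loc s) <= rho + rho].
Proof.
elim => {A W0} [A Hno | A p r S D W Hq Hmin SA Sq SD DA Dc Hcap IH] Q m rho QA Qb Qc.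
  exfalso; apply: (Hno m rho); rewrite /qualifies (le_trans Qc) // ler_nat.
  by apply: subset_leq_card; rewrite subsetI Qb QA.
have rr : r <= rho.
  apply: (Hmin m rho); rewrite /qualifies (le_trans Qc) // ler_nat.
  by apply: subset_leq_card; rewrite subsetI Qb QA.
case: (set_0Vmem (Q :&: D)) => [QD0 | [j]].
  have QAD : Q \subset A :\: D.
    apply/subsetP => x xQ; rewrite inE (subsetP QA) // andbT.
    apply/negP => xD; have : x \in Q :&: D by rewrite inE xQ.
    by rewrite QD0 inE.
  have [j [S' [jQ S'W S'c HS']]] := IH Q m rho QAD Qb Qc.
  exists j, S'; split => //; apply: (subset_trans S'W); exact: subsetUr.
rewrite inE => /andP [jQ jD].
exists j, S; split => //; first exact: subsetUl.
move=> s sS.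
have := subsetP DA j jD; rewrite !inE => /andP [jb _].
have := subsetP SA s sS; rewrite !inE => /andP [sb _].
apply: (le_trans (dtri _ (loc p) _)); rewrite dsym; apply: lerD; exact: le_trans rr.
Qed.

End Cap.


Lemma card_sum (m : nat) (A B : {set 'I_m}) : A \subset B ->
  #|A| = (\sum_(x in B) (x \in A))%N.
Proof.
move=> AB; rewrite -sum1_card [RHS](bigID (mem A)) /= [X in (_ + X)%N]big1 ?addn0.
    apply: eq_big => [x|x ->] //.
    by rewrite andb_idl // => xA; rewrite (subsetP AB).
by move=> x /andP [_ /negbTE ->].
Qed.

Section Main.
Variables (R : realType) (X : Type) (d : X -> X -> R) (n k q : nat) (loc : 'I_n -> X).
Hypothesis d0 : forall x y, 0 <= d x y.
Hypothesis dsym : forall x y, d x y = d y x.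
Hypothesis dtri : forall x y z, d x z <= d x y + d y z.
Hypothesis q0 : (0 < q)%N.
Hypothesis k0 : (0 < k)%N.
Variables (W W0 : {set 'I_n}).
Hypothesis Hcap : capture d k q loc setT W0.
Hypothesis W0W : W0 \subset W.

Variables (N' C : {set 'I_n}) (l : nat).
Hypothesis HC : (q <= #|C| <= l)%N.

Let r i := dq d q loc i C.
Let T i := [set c in C | d (loc i) (loc c) <= r i].
Let Nc c := [set i in N' | c \in T i].
Let goodb i := [exists c in T i, thr R n k q <= (#|[set j in Nc c | r j <= r i]|)%:R].
Let L c := [set i in Nc c | ~~ (thr R n k q <= (#|[set j in Nc c | r j <= r i]|)%:R)].
Let Bd := N' :\: [set i | goodb i].
Let Gd := N' :&: [set i | goodb i].

Lemma qC : (q <= #|C|)%N. Proof. by case/andP: HC. Qed.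

Lemma r_ge0 i : 0 <= r i. Proof. exact: dq_ge0. Qed.

Lemma cardT i : (q <= #|T i|)%N.
Proof. exact: card_T q0 qC. Qed.

Lemma n_pos : (0 < n)%N.
Proof.
have := leq_trans q0 qC => /leq_trans; apply.
by rewrite -[X in (_ <= X)%N](card_ord n) max_card.
Qed.

Lemma thr_pos : 0 < thr R n k q.
Proof. by rewrite /thr divr_gt0 // ltr0n ?muln_gt0 ?q0 ?n_pos. Qed.

Lemma good_wit i : goodb i -> exists S : {set 'I_n},
  [/\ S \subset W, #|S| = q & forall s, s \in S -> d (loc i) (loc s) <= 4 * r i].
Proof.
case/existsP => c /andP [cT Hc].
move: (cT); rewrite inE => /andP [cC dic].
set Q := [set j in Nc c | r j <= r i] in Hc.
have Qb : Q \subset ball d loc c (r i).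
  apply/subsetP => j; rewrite !inE => /andP [/and3P [_ _ djc] rji].
  by rewrite dsym (le_trans djc).
have [j [S [jQ SW0 Sc HS]]] := @capture_hit R X d n k q loc dsym dtri _ _ Hcap _ c (r i) (subsetT Q) Qb Hc.
exists S; split => //; first exact: subset_trans W0W.
move=> s sS.
move: jQ; rewrite !inE => /andP [/and3P [_ _ djc] rji].
apply: (le_trans (dtri _ (loc c) _)).
apply: (le_trans (lerD (lexx _) (dtri _ (loc j) _))).
rewrite dsym in djc.
have := HS s sS; lra.
Qed.


Lemma L_lt c : (#|L c|)%:R < thr R n k q.
Proof.
case: (set_0Vmem (L c)) => [-> | [i0 i0L]]; first by rewrite cards0 thr_pos.
case: (@arg_maxP _ R _ i0 (mem (L c)) r i0L) => im imL immax.
have Him : ~~ (thr R n k q <= (#|[set j in Nc c | r j <= r im]|)%:R).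
  have imL' : im \in L c := imL.
  by move: imL'; rewrite inE => /andP [].
have sub : L c \subset [set j in Nc c | r j <= r im].
  apply/subsetP => j jL.
  have jN : j \in Nc c by move: jL; rewrite inE => /andP [].
  by rewrite inE jN /=; exact: (immax j jL).
rewrite -ltNge in Him; apply: le_lt_trans Him.
by rewrite ler_nat subset_leq_card.
Qed.

Lemma bad_count : (#|Bd| * q <= \sum_(c in C) #|L c|)%N.
Proof.
rewrite -sum_nat_const.
apply: (@leq_trans (\sum_(i in Bd) #|T i|)); first by apply: leq_sum => i _; exact: cardT.
rewrite (eq_bigr (fun i => \sum_(c in C) (c \in T i))%N); last first.
  by move=> i _; apply: card_sum; apply/subsetP => c; rewrite inE => /andP [].
rewrite exchange_big /=; apply: leq_sum => c cC.
have sub : [set i in Bd | c \in T i] \subset Bd.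
  by apply/subsetP => x; rewrite inE => /andP [].
rewrite (eq_bigr (fun i => nat_of_bool (i \in [set i in Bd | c \in T i]))); last first.
  by move=> i iB; rewrite inE iB.
rewrite -card_sum //; apply: subset_leq_card; apply/subsetP => i.
rewrite inE => /andP [iB ciT].
move: iB; rewrite !inE => /andP [ng iN].
have ciT2 := ciT; rewrite inE in ciT2; rewrite iN ciT2 /=.
by move/existsPn: ng => /(_ c); rewrite ciT.
Qed.

Lemma C_nonempty : exists c0, c0 \in C.
Proof.
have : (0 < #|C|)%N by apply: leq_trans q0 qC.
by rewrite card_gt0 => /set0Pn.
Qed.

Lemma bad_lt (gamma : R) : 0 < gamma ->
  gamma * ((l * n)%:R / k%:R) <= (#|N'|)%:R -> (#|Bd|)%:R * gamma < (#|N'|)%:R.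
Proof.
move=> g0 HN.
have H1 : ((#|Bd| * q)%:R : R) <= \sum_(c in C) (#|L c|)%:R.
  by rewrite -natr_sum ler_nat bad_count.
have H2 : \sum_(c in C) (#|L c|)%:R < \sum_(c in C) thr R n k q.
  apply: ltr_sum; last by move=> c _; exact: L_lt.
  have [c0 c0C] := C_nonempty.
  by apply/hasP; exists c0; rewrite ?mem_index_enum.
rewrite sumr_const in H2.
set x : R := n%:R / k%:R.
have x0 : 0 <= x by rewrite /x divr_ge0.
have Ht : thr R n k q = q%:R * x by rewrite /thr natrM mulrA.
have Hl : (l * n)%:R / k%:R = l%:R * x :> R by rewrite natrM mulrA.
rewrite Ht Hl -mulr_natr natrM in H2 H1 HN.
have cl : (#|C|)%:R <= l%:R :> R by rewrite ler_nat; case/andP: HC.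
have qp : 0 < q%:R :> R by rewrite ltr0n.
have b0 : 0 <= (#|Bd|)%:R :> R by [].
set b := (#|Bd|)%:R in H1 b0 *.
set c := (#|C|)%:R in H2 cl.
set qq := q%:R in H1 H2 qp.
set N := (#|N'|)%:R in HN *.
set ll := l%:R in cl HN.
have H3 : b * qq < qq * x * ll.
  apply: (le_lt_trans H1); apply: (lt_le_trans H2).
  rewrite mul1r -mulr_natr ler_wpM2l // mulr_ge0 // ltW //.
have H4 : b < x * ll.
  by rewrite -(ltr_pM2l qp) mulrA (mulrC qq b).
nra.
Qed.

Lemma Tmeet i j : (l < 2 * q)%N -> exists c, (c \in T i) && (c \in T j).
Proof.
move=> l2q.
case: (set_0Vmem (T i :&: T j)) => [H0 | [c]]; last by rewrite inE => ?; exists c.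
exfalso.
have := cardsUI (T i) (T j); rewrite H0 cards0 addn0 => HU.
have sub : T i :|: T j \subset C.
  by apply/subsetP => x; rewrite !inE => /orP [] /andP [].
have := subset_leq_card sub; rewrite HU => H.
have := cardT i; have := cardT j; case/andP: HC => _ Cl.
lia.
Qed.

Lemma d_meet i j : (l < 2 * q)%N -> d (loc i) (loc j) <= r i + r j.
Proof.
move=> l2q; have [c /andP [ci cj]] := Tmeet i j l2q.
move: ci cj; rewrite !inE => /andP [_ ci] /andP [_ cj].
apply: (le_trans (dtri _ (loc c) _)); rewrite (dsym (loc c)); exact: lerD.
Qed.

Lemma card_GB : (#|Gd| + #|Bd|)%N = #|N'|.
Proof. exact: cardsID. Qed.

Lemma good_dq g : goodb g -> dq d q loc g W <= 4 * r g.
Proof.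
case/good_wit => S [SW Sc HS].
by apply: (@dq_le R X d n q loc g W S) => //; rewrite Sc.
Qed.

Lemma Gd_nonempty (gamma : R) : 0 < gamma ->
  gamma * ((l * n)%:R / k%:R) <= (#|N'|)%:R -> 1 <= gamma -> exists g, g \in Gd.
Proof.
move=> g0 HN g1; have Hb := bad_lt gamma g0 HN.
have : (0 < #|Gd|)%N.
  rewrite lt0n; apply/negP => /eqP G0.
  move: Hb; rewrite -card_GB G0 add0n.
  have : (#|Bd|)%:R <= (#|Bd|)%:R * gamma :> R by rewrite ler_peMr.
  move=> H1 H2; have := le_lt_trans H1 H2; by rewrite ltxx.
by rewrite card_gt0 => /set0Pn.
Qed.

Lemma core_part : (l * n)%:R / k%:R <= (#|N'|)%:R :> R ->
  ~ (forall i, i \in N' -> 5 * r i < dq d q loc i W).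
Proof.
move=> HN Hall.
have [g gG] : exists g, g \in Gd by apply: (@Gd_nonempty 1) => //; rewrite mul1r.
move: (gG); rewrite !inE => /andP [gN gg].
have := good_dq g gg; have := Hall g gN; have := r_ge0 g; lra.
Qed.

Lemma tcore_part (gamma : R) : 1 < gamma -> (l < 2 * q)%N ->
  gamma * ((l * n)%:R / k%:R) <= (#|N'|)%:R ->
  ~ (5 * gamma / (gamma - 1) * (\sum_(i in N') r i) < \sum_(i in N') dq d q loc i W).
Proof.
move=> g1 l2q HN Hsum.
have gp : 0 < gamma by apply: lt_trans g1.
have Hb := bad_lt gamma gp HN.
have [g gG] := Gd_nonempty gamma gp HN (ltW g1).
case: (@arg_minP _ R _ g (mem Gd) r gG) => g0 g0G g0min.
have g0G' : g0 \in Gd := g0G.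
move: (g0G'); rewrite !inE => /andP [g0N g0g].
have [S0 [S0W S0c HS0]] := good_wit g0 g0g.
rewrite [X in _ * X](big_setID [set i | goodb i]) [X in _ < X](big_setID [set i | goodb i]) /= -/Gd -/Bd in Hsum.
set SG := \sum_(i in Gd) r i in Hsum.
set SB := \sum_(i in Bd) r i in Hsum.
set DG := \sum_(i in Gd) dq d q loc i W in Hsum.
set DB := \sum_(i in Bd) dq d q loc i W in Hsum.
set r0 := r g0.
have r00 : 0 <= r0 := r_ge0 g0.
have HDG : DG <= 4 * SG.
  rewrite /DG /SG mulr_sumr; apply: ler_sum => i; rewrite inE => /andP [_].
  by rewrite inE => /(good_dq i).
have HDB : DB <= SB + (5 * r0) *+ #|Bd|.
  rewrite /DB /SB -sumr_const -big_split /=; apply: ler_sum => i iB.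
  apply: (@dq_le R X d n q loc i W S0) => //; first by rewrite S0c.
  move=> s sS; apply: (le_trans (dtri _ (loc g0) _)).
  have := d_meet i g0 l2q; have := HS0 s sS; rewrite -/r0; lra.
have HSG : r0 *+ #|Gd| <= SG.
  rewrite /SG -sumr_const; apply: ler_sum => i iG; exact: (g0min i iG).
have SB0 : 0 <= SB by rewrite /SB sumr_ge0 // => i _; exact: r_ge0.
have HGB : (#|Bd|)%:R * gamma < (#|Gd|)%:R + (#|Bd|)%:R :> R.
  by rewrite -natrD card_GB.
rewrite -mulr_natr in HDB; rewrite -mulr_natr in HSG.
set b := (#|Bd|)%:R in HDB HGB.
set g' := (#|Gd|)%:R in HSG HGB.
have b0 : 0 <= b by rewrite /b ler0n.
have gg0 : 0 <= g' by rewrite /g' ler0n.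
have gm1 : 0 < gamma - 1 by rewrite subr_gt0.
rewrite mulrAC ltr_pdivrMr // in Hsum.
have P1 : (gamma - 1) * DG <= (gamma - 1) * (4 * SG) by rewrite ler_wpM2l // ltW.
have P2 : (gamma - 1) * DB <= (gamma - 1) * (SB + 5 * r0 * b) by rewrite ler_wpM2l // ltW.
have P3 : r0 * (b * gamma - b) <= r0 * g'.
  by rewrite ler_wpM2l // lerBlDr; apply: ltW.
have SG0 : 0 <= SG by apply: le_trans HSG; rewrite mulr_ge0.
have P5 : 0 <= (gamma - 1) * SG by rewrite mulr_ge0 // ltW.
have P6 : 0 <= gamma * SB by rewrite mulr_ge0 // ltW.
have P4 : r0 * g' <= SG := HSG.
have E : (gamma - 1) * (DG + DB) <= 5 * gamma * (SG + SB).
  have -> : (gamma - 1) * (DG + DB) = (gamma - 1) * DG + (gamma - 1) * DB by ring.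
  have Q2 : (gamma - 1) * (SB + 5 * r0 * b) = (gamma - 1) * SB + 5 * (r0 * (b * gamma - b)) by ring.
  have Q1 : (gamma - 1) * (4 * SG) = 4 * ((gamma - 1) * SG) by ring.
  have Q3 : 5 * gamma * (SG + SB) = 5 * ((gamma - 1) * SG) + 5 * SG + 5 * (gamma * SB) by ring.
  rewrite Q3; rewrite Q2 in P2; rewrite Q1 in P1.
  have Q4 : (gamma - 1) * SB = gamma * SB - SB by ring.
  rewrite Q4 in P2.
  lra.
rewrite [X in _ < X]mulrC in Hsum; have := lt_le_trans Hsum E.
by rewrite ltxx.
Qed.

End Main.


Theorem theorem12 (R : realType) (X : Type) (d : X -> X -> R)
    (n k q : nat) (loc : 'I_n -> X) (W : {set 'I_n}) :
  is_metric d -> (0 < k)%N -> (1 <= q)%N -> (q <= k)%N ->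
  fgc_outcome d k q loc W ->
  [/\ in_q_core d k q loc 5 W,
      ((k <= n)%N -> q_individually_fair d k q loc 3 W)
    & forall gamma : R, 1 < gamma ->
        in_q_tcore_restr d k q loc gamma (5 * gamma / (gamma - 1)) W].
Proof.
case=> d0 deq dsym dtri k0 q1 qk [W0 [Hcap W0W _]].
split.
- move=> [l [N' [C [HN HC Hall]]]].
  exact: (@core_part R X d n k q loc d0 dsym dtri q1 k0 W W0 Hcap W0W N' C l HC HN Hall).
- move=> _ i r Hr.
  have [j [S [jQ SW0 Sc HS]]] :=
    @capture_hit R X d n k q loc dsym dtri _ _ Hcap (ball d loc i r) i r (subsetT _) (subxx _) Hr.
  apply: (@dq_le R X d n q loc i W S) => //; first exact: subset_trans W0W; first by rewrite Sc.
  move=> s sS; move: jQ; rewrite inE => dij.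
  apply: (le_trans (dtri _ (loc j) _)); have := HS s sS; lra.
- move=> gamma g1 [l [N' [C [l2q HN HC Hsum]]]].
  exact: (@tcore_part R X d n k q loc d0 dsym dtri q1 k0 W W0 Hcap W0W N' C l HC gamma g1 l2q HN Hsum).
Qed.
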